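(* Let $\kappa:[-1,1]\to\mathbb{R}$ be given by $\kappa(t)=\sum_{q\ge 0}\frac{J_q^2}{q!}t^q$, where $J_q\in\mathbb{R}$, $J_q\neq 0$ for infinitely many $q$, $\sum_{q\ge1}\frac{|J_q|}{(q-1)!}<\infty$ (so that $\kappa\in C^1([-1,1])$), and $\kappa(1)=1$. For $L\ge1$ let $\kappa_L=\kappa\circ\cdots\circ\kappa$ ($L$ times), and let $\mathcal{I}(\kappa)=\{t\in[-1,1]:\kappa(t)=1\}$. Assume $\kappa'(1)=1$ and that there exist $c\in\mathbb{R}\setminus\{0\}$ and $\rho>1$ such that \[ 1-\kappa(t)=\kappa'(1)(1-t)-c(1-t)^{\rho}+o\bigl((1-t)^{\rho}\bigr)\quad\text{as } t\to1^-. \] Then $c>0$ and, for every $t\in[-1,1]$, \[ \mathfrak{S}(t):=\lim_{L\to\infty}L^{1/(\rho-1)}\bigl(1-\kappa_L(t)\bigr)=\begin{cases}0,& t\in\mathcal{I}(\kappa),\\ h_{c,\rho},& t\notin\mathcal{I}(\kappa),\end{cases} \] where $h_{c,\rho}=(c(\rho-1))^{-1/(\rho-1)}$. *)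

(* Defs.v *)
From Stdlib Require Import Reals.
From Coquelicot Require Import Coquelicot.
Open Scope R_scope.

Definition kappa (J : nat -> R) (t : R) : R :=
  Series (fun q => J q ^ 2 / INR (Factorial.fact q) * t ^ q).

Definition kappa_iter (J : nat -> R) (L : nat) (t : R) : R :=
  Nat.iter L (kappa J) t.

Definition h_const (c rho : R) : R := Rpower (c * (rho - 1)) (- (1 / (rho - 1))).

(* Main.v *)
Require Import Defs.
From Stdlib Require Import Reals Lra Lia Classical.
From Coquelicot Require Import Coquelicot.
Open Scope R_scope.

Definition aa (J : nat -> R) (q : nat) : R := J q ^ 2 / INR (Factorial.fact q).

Lemma aa_nn J q : 0 <= aa J q.
Proof.
  unfold aa. apply Rmult_le_pos. apply pow2_ge_0.
  left; apply Rinv_0_lt_compat, INR_fact_lt_0.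
Qed.

Lemma L1 J : kappa J 1 = 1 -> is_lim_seq (fun N => sum_f_R0 (aa J) N) 1.
Proof.
  intros Hk1.
  set (P := sum_n (fun q => J q ^ 2 / INR (Factorial.fact q) * 1 ^ q)).
  assert (inc : forall n, P n <= P (S n)).
  { intros n. unfold P. rewrite sum_Sn.
    match goal with |- _ <= plus ?a ?b => change (a <= a + b) end.
    pose proof (aa_nn J (S n)) as H. unfold aa in H. rewrite pow1. lra. }
  pose proof (Lim_seq_correct _ (ex_lim_seq_incr _ inc)) as HL.
  unfold kappa, Series in Hk1. fold P in Hk1.
  destruct (Lim_seq P) as [l| |] eqn:E; simpl in Hk1; try lra.
  subst l. eapply is_lim_seq_ext; [|exact HL].
  intros n. unfold P. rewrite sum_n_Reals. apply sum_eq. intros i _.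
  rewrite pow1, Rmult_1_r. reflexivity.
Qed.

Lemma L2 J u : kappa J 1 = 1 -> Rabs u <= 1 ->
  is_lim_seq (fun N => sum_f_R0 (fun q => aa J q * u ^ q) N) (kappa J u).
Proof.
  intros Hk1 Hu.
  assert (Ha : ex_series (aa J)).
  { exists 1. pose proof (L1 J Hk1) as H.
    apply (is_lim_seq_ext _ (sum_n (aa J))) in H.
    exact H. intros n. now rewrite sum_n_Reals. }
  assert (He : ex_series (fun q => J q ^ 2 / INR (Factorial.fact q) * u ^ q)).
  { apply (@ex_series_le R_AbsRing R_CompleteNormedModule _ (aa J)); [|exact Ha].
    intros n. change norm with Rabs. simpl.
    rewrite Rabs_mult. fold (aa J n). rewrite Rabs_pos_eq by apply aa_nn.
    rewrite <- RPow_abs.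
    assert (Rabs u ^ n <= 1).
    { rewrite <- (pow1 n). apply pow_incr. split; [apply Rabs_pos|exact Hu]. }
    pose proof (aa_nn J n) as Ha2. unfold aa in *. simpl in *. nra. }
  pose proof (Series_correct _ He) as H.
  unfold kappa. eapply is_lim_seq_ext; [|exact H].
  intros n. now rewrite sum_n_Reals.
Qed.

Lemma at_left_eps f l x : filterlim f (at_left x) (locally l) ->
  forall eps, 0 < eps -> exists delta, 0 < delta /\
    forall t, x - delta < t < x -> Rabs (f t - l) < eps.
Proof.
  intros H eps Heps.
  destruct (proj1 (filterlim_locally f l) H (mkposreal eps Heps)) as [d Hd].
  exists d. split. apply cond_pos.
  intros t Ht. specialize (Hd t).
  assert (B : ball x d t).
  { unfold ball; simpl; unfold AbsRing_ball, abs, minus, plus, opp; simpl.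
    apply Rabs_def1; lra. }
  specialize (Hd B (proj2 Ht)).
  unfold ball in Hd; simpl in Hd; unfold AbsRing_ball, abs, minus, plus, opp in Hd; simpl in Hd.
  exact Hd.
Qed.

Lemma bern1 t q : 0 <= t <= 1 -> 1 - INR q * (1 - t) <= t ^ q.
Proof.
  intros Ht. induction q as [|q IH].
  - simpl. lra.
  - rewrite S_INR. simpl. pose proof (pos_INR q).
    assert (0 <= t * (t ^ q - (1 - INR q * (1 - t)))) by (apply Rmult_le_pos; lra).
    assert (0 <= INR q * ((1 - t) * (1 - t))) by (apply Rmult_le_pos; nra).
    nra.
Qed.

Lemma bern2 t q : 0 <= t <= 1 ->
  INR q * (1 - t) - INR q ^ 2 * (1 - t) ^ 2 <= 1 - t ^ q.
Proof.
  intros Ht. induction q as [|q IH].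
  - simpl. lra.
  - pose proof (bern1 t q Ht). rewrite S_INR. simpl. simpl in IH.
    pose proof (pos_INR q).
    assert (0 <= (1 - t) * (t ^ q - (1 - INR q * (1 - t)))) by (apply Rmult_le_pos; lra).
    assert (0 <= (INR q + 1) * ((1 - t) * (1 - t))) by (apply Rmult_le_pos; nra).
    nra.
Qed.

Lemma L1m J t : kappa J 1 = 1 -> Rabs t <= 1 ->
  is_lim_seq (fun M => sum_f_R0 (fun q => aa J q * (1 - t ^ q)) M) (1 - kappa J t).
Proof.
  intros Hk1 Ht.
  pose proof (is_lim_seq_minus' _ _ _ _ (L1 J Hk1) (L2 J t Hk1 Ht)) as H.
  eapply is_lim_seq_ext; [|exact H]. intros n. simpl.
  rewrite <- minus_sum. apply sum_eq. intros; ring.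
Qed.

Lemma L3 J : kappa J 1 = 1 ->
  filterlim (fun t => (kappa J t - kappa J 1) / (t - 1)) (at_left 1) (locally 1) ->
  forall N, sum_f_R0 (fun q => INR q * aa J q) N <= 1.
Proof.
  intros Hk1 Hderiv N.
  set (S := sum_f_R0 (fun q => INR q * aa J q) N).
  set (C := sum_f_R0 (fun q => INR q ^ 2 * aa J q) N).
  assert (HC : 0 <= C).
  { apply cond_pos_sum. intros n. apply Rmult_le_pos. apply pow2_ge_0. apply aa_nn. }
  assert (key : forall t, 0 < t < 1 -> S - (1 - t) * C <= (kappa J t - kappa J 1) / (t - 1)).
  { intros t Ht. rewrite Hk1.
    assert (Hl := L1m J t Hk1 ltac:(rewrite Rabs_pos_eq; lra)).
    assert (part : sum_f_R0 (fun q => aa J q * (1 - t ^ q)) N <= 1 - kappa J t).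
    { apply sum_incr. now apply is_lim_seq_Reals.
      intros n. apply Rmult_le_pos. apply aa_nn.
      assert (t ^ n <= 1 ^ n) by (apply pow_incr; lra). rewrite pow1 in H. lra. }
    assert (lower : (1 - t) * S - (1 - t) ^ 2 * C <=
                    sum_f_R0 (fun q => aa J q * (1 - t ^ q)) N).
    { replace ((1 - t) * S - (1 - t) ^ 2 * C) with
        (sum_f_R0 (fun q => aa J q * (INR q * (1 - t) - INR q ^ 2 * (1 - t) ^ 2)) N).
      - apply sum_Rle. intros n _. apply Rmult_le_compat_l. apply aa_nn.
        apply bern2. lra.
      - unfold S, C. rewrite !scal_sum. rewrite <- minus_sum. apply sum_eq.
        intros; ring. }
    replace ((kappa J t - 1) / (t - 1)) with ((1 - kappa J t) / (1 - t)) by (field; lra).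
    apply (Rmult_le_reg_r (1 - t)); [lra|].
    replace ((1 - kappa J t) / (1 - t) * (1 - t)) with (1 - kappa J t) by (field; lra).
    nra. }
  destruct (Rle_or_lt S 1) as [H|H]; [exact H|exfalso].
  set (eps := (S - 1) / 2).
  destruct (at_left_eps _ _ _ Hderiv eps ltac:(unfold eps; lra)) as [d [Hd Hd2]].
  set (m := Rmin (d / 2) (Rmin (1 / 2) (eps / (C + 1)))).
  assert (Hm1 : 0 < m).
  { unfold m. repeat apply Rmin_pos; try lra. apply Rdiv_lt_0_compat; unfold eps; lra. }
  assert (Hm2 : m <= d / 2) by apply Rmin_l.
  assert (Hm3 : m <= 1 / 2) by (eapply Rle_trans; [apply Rmin_r|apply Rmin_l]).
  assert (Hm4 : m <= eps / (C + 1)) by (eapply Rle_trans; [apply Rmin_r|apply Rmin_r]).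
  assert (HmC : m * C <= eps * (C / (C + 1))).
  { apply Rle_trans with (eps / (C + 1) * C). apply Rmult_le_compat_r; lra.
    right. field. lra. }
  assert (C / (C + 1) < 1).
  { apply (Rmult_lt_reg_r (C + 1)); [lra|]. replace (C / (C + 1) * (C + 1)) with C by (field; lra). lra. }
  assert (0 < eps) by (unfold eps; lra).
  specialize (Hd2 (1 - m) ltac:(lra)).
  specialize (key (1 - m) ltac:(lra)).
  replace (1 - (1 - m)) with m in key by ring.
  apply Rabs_def2 in Hd2. unfold eps in *. nra.
Qed.

Lemma L4 J : (forall N : nat, exists q : nat, (N <= q)%nat /\ J q <> 0) ->
  exists q0, (2 <= q0)%nat /\ 0 < aa J q0.
Proof.
  intros H. destruct (H 2%nat) as [q [Hq HJ]]. exists q. split; [exact Hq|].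
  unfold aa. apply Rdiv_lt_0_compat. 2: apply INR_fact_lt_0.
  simpl. rewrite Rmult_1_r. assert (0 < J q * J q \/ J q * J q > 0).
  { left. destruct (Rlt_or_le 0 (J q)); [nra|]. destruct H0; [nra|contradiction]. }
  destruct H0; lra.
Qed.

Lemma upow_le1 u q : -1 <= u <= 1 -> u ^ q <= 1.
Proof.
  intros Hu. apply Rle_trans with (Rabs u ^ q). apply pow_Rabs.
  rewrite <- (pow1 q). apply pow_incr. split. apply Rabs_pos. apply Rabs_le; lra.
Qed.

Lemma hq_nn u q : -1 <= u <= 1 -> 0 <= u ^ q - 1 + INR q * (1 - u).
Proof.
  intros Hu. induction q as [|q IH].
  - simpl. lra.
  - rewrite S_INR. simpl. pose proof (upow_le1 u q Hu).
    assert (0 <= (1 - u) * (1 - u ^ q)) by (apply Rmult_le_pos; lra). nra.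
Qed.

Lemma hq_2 u k : -1 <= u <= 1 -> (1 - u) ^ 2 <= u ^ (k + 2) - 1 + INR (k + 2) * (1 - u).
Proof.
  intros Hu. induction k as [|k IH].
  - simpl. lra.
  - replace (S k + 2)%nat with (S (k + 2)) by lia. rewrite S_INR.
    change (u ^ S (k + 2)) with (u * u ^ (k + 2)).
    pose proof (upow_le1 u (k + 2) Hu).
    assert (0 <= (1 - u) * (1 - u ^ (k + 2))) by (apply Rmult_le_pos; lra). nra.
Qed.

Lemma sum_ge_term f k M : (forall n, 0 <= f n) -> (k <= M)%nat -> f k <= sum_f_R0 f M.
Proof.
  intros Hf Hk. induction M as [|M IH].
  - inversion Hk. simpl. lra.
  - simpl. destruct (Nat.eq_dec k (S M)) as [->|Hne].
    + pose proof (cond_pos_sum f M Hf). lra.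
    + assert (k <= M)%nat by lia. specialize (IH H). pose proof (Hf (S M)). lra.
Qed.

Lemma L5 J q0 : kappa J 1 = 1 ->
  filterlim (fun t => (kappa J t - kappa J 1) / (t - 1)) (at_left 1) (locally 1) ->
  (2 <= q0)%nat ->
  forall u, -1 <= u <= 1 -> aa J q0 * (1 - u) ^ 2 <= kappa J u - u.
Proof.
  intros Hk1 Hderiv Hq0 u Hu.
  assert (Hl := L1m J u Hk1 ltac:(apply Rabs_le; lra)).
  assert (bound : forall M, (q0 <= M)%nat ->
    sum_f_R0 (fun q => aa J q * (1 - u ^ q)) M <= (1 - u) - aa J q0 * (1 - u) ^ 2).
  { intros M HM.
    replace (sum_f_R0 (fun q => aa J q * (1 - u ^ q)) M) with
      ((1 - u) * sum_f_R0 (fun q => INR q * aa J q) M -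
       sum_f_R0 (fun q => aa J q * (u ^ q - 1 + INR q * (1 - u))) M).
    2:{ rewrite scal_sum, <- minus_sum. apply sum_eq. intros; ring. }
    assert (A : (1 - u) * sum_f_R0 (fun q => INR q * aa J q) M <= 1 - u).
    { pose proof (L3 J Hk1 Hderiv M). nra. }
    assert (B : aa J q0 * (u ^ q0 - 1 + INR q0 * (1 - u)) <=
                sum_f_R0 (fun q => aa J q * (u ^ q - 1 + INR q * (1 - u))) M).
    { apply (sum_ge_term (fun q => aa J q * (u ^ q - 1 + INR q * (1 - u)))); [|exact HM].
      intros n. apply Rmult_le_pos. apply aa_nn. apply hq_nn; lra. }
    assert (C : aa J q0 * (1 - u) ^ 2 <= aa J q0 * (u ^ q0 - 1 + INR q0 * (1 - u))).
    { apply Rmult_le_compat_l. apply aa_nn.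
      replace q0 with ((q0 - 2) + 2)%nat by lia. apply hq_2; lra. }
    lra. }
  assert (H := is_lim_seq_le_loc _ _ _ _ ltac:(exists q0; exact bound) Hl
                 (is_lim_seq_const ((1 - u) - aa J q0 * (1 - u) ^ 2))).
  simpl in H. lra.
Qed.

Lemma L6 J q0 : kappa J 1 = 1 -> (2 <= q0)%nat -> 0 < aa J q0 ->
  forall u, -1 < u < 1 -> kappa J u < 1.
Proof.
  intros Hk1 Hq0 Ha u Hu.
  assert (Hl := L1m J u Hk1 ltac:(apply Rabs_le; lra)).
  assert (Hnn : forall n, 0 <= aa J n * (1 - u ^ n)).
  { intros n. apply Rmult_le_pos. apply aa_nn. pose proof (upow_le1 u n). lra. }
  assert (P := sum_incr _ q0 _ (proj1 (is_lim_seq_Reals _ _) Hl) Hnn).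
  assert (T := sum_ge_term _ q0 q0 Hnn (le_n _)).
  assert (u ^ q0 < 1).
  { apply Rle_lt_trans with (Rabs u ^ q0). apply pow_Rabs.
    apply pow_lt_1_compat. split. apply Rabs_pos. apply Rabs_def1; lra. lia. }
  assert (0 < aa J q0 * (1 - u ^ q0)) by (apply Rmult_lt_0_compat; lra).
  lra.
Qed.

Lemma L6b J : kappa J 1 = 1 -> forall u, -1 <= u <= 1 -> kappa J u <= 1.
Proof.
  intros Hk1 u Hu.
  assert (Hl := L1m J u Hk1 ltac:(apply Rabs_le; lra)).
  assert (Hnn : forall n, 0 <= aa J n * (1 - u ^ n)).
  { intros n. apply Rmult_le_pos. apply aa_nn. pose proof (upow_le1 u n). lra. }
  assert (P := sum_incr _ 0 _ (proj1 (is_lim_seq_Reals _ _) Hl) Hnn).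
  pose proof (Hnn 0%nat). simpl in P. lra.
Qed.

Lemma L7 J c rho : kappa J 1 = 1 ->
  filterlim (fun t => (kappa J t - kappa J 1) / (t - 1)) (at_left 1) (locally 1) ->
  (exists q0, (2 <= q0)%nat /\ 0 < aa J q0) ->
  c <> 0 ->
  filterlim
            (fun t => (1 - kappa J t - (1 * (1 - t) - c * Rpower (1 - t) rho))
                      / Rpower (1 - t) rho)
            (at_left 1) (locally 0) -> 0 < c.
Proof.
  intros Hk1 Hderiv [q0 [Hq0 Ha]] Hc Hexp.
  destruct (Rlt_or_le 0 c) as [H|H]; [exact H|exfalso].
  assert (Hc' : c < 0) by (destruct H; [exact H|contradiction]).
  destruct (at_left_eps _ _ _ Hexp (- c) ltac:(lra)) as [d [Hd Hd2]].
  set (m := Rmin (d / 2) (1 / 2)).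
  assert (0 < m) by (unfold m; apply Rmin_pos; lra).
  assert (m <= d / 2) by apply Rmin_l. assert (m <= 1 / 2) by apply Rmin_r.
  specialize (Hd2 (1 - m) ltac:(lra)).
  pose proof (L5 J q0 Hk1 Hderiv Hq0 (1 - m) ltac:(lra)) as K.
  replace (1 - (1 - m)) with m in Hd2 by ring.
  assert (HP : 0 < Rpower m rho) by (unfold Rpower; apply exp_pos).
  replace ((1 - kappa J (1 - m) - (1 * m - c * Rpower m rho)) / Rpower m rho - 0)
    with ((1 - kappa J (1 - m) - m) / Rpower m rho + c) in Hd2 by (field; lra).
  assert ((1 - kappa J (1 - m) - m) / Rpower m rho <= 0).
  { unfold Rdiv. apply Rmult_le_0_r. pose proof (aa_nn J q0). nra.
    left; apply Rinv_0_lt_compat; exact HP. }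
  apply Rabs_def2 in Hd2. lra.
Qed.

Lemma A1 s r : 0 < r -> (forall n, 0 < s n) -> is_lim_seq s 0 ->
  is_lim_seq (fun n => Rpower (s n) r) 0.
Proof.
  intros Hr Hs Hl. apply is_lim_seq_Reals. apply is_lim_seq_Reals in Hl.
  intros eps Heps.
  destruct (Hl (Rpower eps (1 / r)) ltac:(unfold Rpower; apply exp_pos)) as [N HN].
  exists N. intros n Hn. specialize (HN n Hn). unfold Rdist in *.
  rewrite Rminus_0_r in *. rewrite Rabs_pos_eq in HN by (left; apply Hs).
  rewrite Rabs_pos_eq by (left; unfold Rpower; apply exp_pos).
  unfold Rpower at 1. replace eps with (exp (r * ln (Rpower eps (1 / r)))).
  - apply exp_increasing. apply Rmult_lt_compat_l; [exact Hr|].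
    apply ln_increasing; [apply Hs|exact HN].
  - unfold Rpower. rewrite ln_exp. replace (r * (1 / r * ln eps)) with (ln eps) by (field; lra).
    apply exp_ln; exact Heps.
Qed.

Definition phi (r x : R) : R :=
  if Req_EM_T x 0 then r else (Rpower (1 - x) (- r) - 1) / x.

Lemma Rpower1 y : Rpower 1 y = 1.
Proof. unfold Rpower. rewrite ln_1, Rmult_0_r. apply exp_0. Qed.

Lemma A2 r x : is_lim_seq x 0 -> is_lim_seq (fun n => phi r (x n)) r.
Proof.
  intros Hx. apply is_lim_seq_Reals. apply is_lim_seq_Reals in Hx.
  intros eps Heps.
  destruct (derivable_pt_lim_power 1 (- r) Rlt_0_1 eps Heps) as [d Hd].
  destruct (Hx d (cond_pos d)) as [N HN].
  exists N. intros n Hn. specialize (HN n Hn). unfold Rdist in *. rewrite Rminus_0_r in HN.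
  unfold phi. destruct (Req_EM_T (x n) 0) as [E|E].
  - rewrite Rminus_eq_0, Rabs_R0. exact Heps.
  - specialize (Hd (- x n) ltac:(lra) ltac:(rewrite Rabs_Ropp; exact HN)).
    rewrite !Rpower1 in Hd. replace (1 + - x n) with (1 - x n) in Hd by ring.
    replace ((Rpower (1 - x n) (- r) - 1) / - x n - - r * 1) with
      (- ((Rpower (1 - x n) (- r) - 1) / x n - r)) in Hd by (field; exact E).
    rewrite Rabs_Ropp in Hd. exact Hd.
Qed.

Lemma A3 b n : sum_f_R0 (fun k => b (S k) - b k) n = b (S n) - b 0%nat.
Proof. induction n as [|n IH]; simpl; [ring|rewrite IH; ring]. Qed.

Lemma A4 : is_lim_seq (fun n => / INR (S n)) 0.
Proof.
  assert (H := is_lim_seq_inv _ _ (proj1 (is_lim_seq_incr_1 _ _) is_lim_seq_INR) ltac:(discriminate)).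
  exact H.
Qed.

Lemma A5 y z : 0 < z -> continuity_pt (fun x => Rpower x y) z.
Proof.
  intros Hz. apply derivable_continuous_pt. exists (y * Rpower z (y - 1)).
  apply derivable_pt_lim_power; exact Hz.
Qed.

Lemma asym (s e : nat -> R) c r : 0 < r -> 0 < c -> (forall n, 0 < s n) ->
  is_lim_seq s 0 -> is_lim_seq e 0 ->
  (forall n, s (S n) = s n - c * Rpower (s n) (1 + r) + e n * Rpower (s n) (1 + r)) ->
  is_lim_seq (fun n => Rpower (INR (S n)) (1 / r) * s n) (Rpower (c * r) (- (1 / r))).
Proof.
  intros Hr Hc Hs Hsl Hel Hrec.
  set (x := fun n => (c - e n) * Rpower (s n) r).
  assert (Hx : is_lim_seq x 0).
  { assert (H := is_lim_seq_mult' _ _ _ _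
      (is_lim_seq_minus' _ _ _ _ (is_lim_seq_const c) Hel) (A1 s r Hr Hs Hsl)).
    rewrite Rmult_0_r in H. exact H. }
  assert (HR : forall n, 0 < Rpower (s n) r) by (intros; unfold Rpower; apply exp_pos).
  assert (Hrec2 : forall n, s (S n) = s n * (1 - x n)).
  { intros n. rewrite Hrec, Rpower_plus, Rpower_1 by apply Hs. unfold x. ring. }
  assert (H1x : forall n, 0 < 1 - x n).
  { intros n. pose proof (Hs (S n)) as H. rewrite Hrec2 in H. pose proof (Hs n).
    destruct (Rlt_or_le 0 (1 - x n)) as [K|K]; [exact K|]. nra. }
  set (b := fun n => Rpower (s n) (- r)).
  assert (Hb : forall n, b n * Rpower (s n) r = 1).
  { intros n. unfold b. rewrite <- Rpower_plus. replace (- r + r) with 0 by ring.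
    apply Rpower_O, Hs. }
  assert (Hdiff : forall n, b (S n) - b n = (c - e n) * phi r (x n)).
  { intros n. unfold b at 1. rewrite Hrec2, <- Rpower_mult_distr by (apply Hs || apply H1x).
    fold (b n). unfold phi. destruct (Req_EM_T (x n) 0) as [E|E].
    - rewrite E, Rminus_0_r, Rpower1.
      assert (c - e n = 0).
      { unfold x in E. apply Rmult_integral in E. destruct E as [E|E]; [exact E|].
        pose proof (HR n). lra. }
      rewrite H. ring.
    - assert (Hce : c - e n <> 0). { intro K. apply E. unfold x. rewrite K. ring. }
      assert (Hbn : b n = / Rpower (s n) r).
      { apply (Rmult_eq_reg_r (Rpower (s n) r)); [rewrite Hb; field|]; apply Rgt_not_eq, HR. }
      rewrite Hbn. unfold x. field. split; [apply Rgt_not_eq, HR|exact Hce]. }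
  assert (HD : is_lim_seq (fun n => b (S n) - b n) (c * r)).
  { eapply is_lim_seq_ext. intros n. symmetry. apply Hdiff.
    assert (H := is_lim_seq_mult' _ _ _ _
      (is_lim_seq_minus' _ _ _ _ (is_lim_seq_const c) Hel) (A2 r x Hx)).
    rewrite Rminus_0_r in H. exact H. }
  assert (HC := Cesaro_1 _ _ (proj1 (is_lim_seq_Reals _ _) HD)).
  apply is_lim_seq_Reals in HC. apply is_lim_seq_incr_1 in HC.
  assert (HC2 : is_lim_seq (fun n => (b (S n) - b 0%nat) / INR (S n)) (c * r)).
  { eapply is_lim_seq_ext; [|exact HC]. intros n. cbv beta. simpl (Init.Nat.pred (S n)).
    cbv beta. rewrite (A3 b n). reflexivity. }
  assert (HQ : is_lim_seq (fun n => b n / INR (S n)) (c * r)).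
  { assert (H := is_lim_seq_plus' _ _ _ _ HC2
      (is_lim_seq_mult' _ _ _ _ (is_lim_seq_minus' _ _ _ _ (is_lim_seq_const (b 0%nat)) HD) A4)).
    rewrite Rmult_0_r, Rplus_0_r in H.
    eapply is_lim_seq_ext; [|exact H]. intros n. cbv beta.
    field. apply Rgt_not_eq, lt_0_INR. lia. }
  assert (H := is_lim_seq_continuous _ _ _ (A5 (- (1 / r)) (c * r) ltac:(nra)) HQ).
  eapply is_lim_seq_ext; [|exact H]. intros n. cbv beta.
  assert (HN : 0 < INR (S n)) by (apply lt_0_INR; lia).
  unfold b, Rpower. replace (exp (- r * ln (s n)) / INR (S n)) with (exp (- r * ln (s n)) * / INR (S n)) by reflexivity. 
  rewrite (ln_mult (exp (- r * ln (s n))) (/ INR (S n))) by (apply exp_pos || apply Rinv_0_lt_compat, HN).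
  rewrite ln_exp, ln_Rinv by exact HN.
  replace (- (1 / r) * (- r * ln (s n) + - ln (INR (S n))))
    with (ln (s n) + 1 / r * ln (INR (S n))) by (field; lra).
  rewrite exp_plus, exp_ln by apply Hs. ring.
Qed.

Theorem lemma3p7 (J : nat -> R) (c rho : R)
  (HJinf : forall N : nat, exists q : nat, (N <= q)%nat /\ J q <> 0)
  (HJsum : ex_series (fun n => Rabs (J (S n)) / INR (Factorial.fact n)))
  (Hk1 : kappa J 1 = 1)
  (Hderiv : filterlim (fun t => (kappa J t - kappa J 1) / (t - 1))
              (at_left 1) (locally 1))
  (Hc : c <> 0) (Hrho : 1 < rho)
  (Hexp : filterlim
            (fun t => (1 - kappa J t - (1 * (1 - t) - c * Rpower (1 - t) rho))
                      / Rpower (1 - t) rho)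
            (at_left 1) (locally 0)) :
  0 < c /\
  forall t : R, -1 <= t <= 1 ->
    is_lim_seq (fun L : nat => Rpower (INR L) (1 / (rho - 1)) * (1 - kappa_iter J L t))
      (if Req_EM_T (kappa J t) 1 then 0 else h_const c rho).
Proof.
  destruct (L4 J HJinf) as [q0 [Hq0 Ha]].
  assert (Hc' : 0 < c) by (apply (L7 J c rho Hk1 Hderiv (ex_intro _ q0 (conj Hq0 Ha)) Hc Hexp)).
  split; [exact Hc'|]. intros t Ht.
  destruct (Req_EM_T (kappa J t) 1) as [E|E].
  - apply is_lim_seq_incr_1. apply is_lim_seq_ext with (fun _ => 0); [|apply is_lim_seq_const].
    intros n. assert (K : kappa_iter J (S n) t = 1).
    { induction n as [|n IH]; [exact E|].
      change (kappa_iter J (S (S n)) t) with (kappa J (kappa_iter J (S n) t)).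
      rewrite IH. exact Hk1. }
    rewrite K. ring.
  - set (u := fun n => kappa_iter J (S n) t).
    assert (Hu_rec : forall n, u (S n) = kappa J (u n)) by reflexivity.
    assert (HL5 := L5 J q0 Hk1 Hderiv Hq0).
    assert (Hbnd : forall n, -1 < u n < 1).
    { induction n as [|n IH].
      - change (u 0%nat) with (kappa J t).
        pose proof (L6b J Hk1 t Ht). pose proof (HL5 t Ht).
        split; [|destruct H; [exact H|contradiction]].
        assert (0 <= aa J q0 * (1 - t) ^ 2) by (apply Rmult_le_pos; [apply aa_nn|apply pow2_ge_0]).
        destruct (proj1 Ht) as [Hlt|Heq]. lra. subst t. simpl in H0. nra.
      - rewrite Hu_rec. pose proof (HL5 (u n) ltac:(lra)).
        assert (0 <= aa J q0 * (1 - u n) ^ 2) by (apply Rmult_le_pos; [apply aa_nn|apply pow2_ge_0]).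
        split. lra. apply (L6 J q0 Hk1 Hq0 Ha). exact IH. }
    assert (Hmono : forall n, u n <= u (S n)).
    { intros n. rewrite Hu_rec. pose proof (HL5 (u n) ltac:(specialize (Hbnd n); lra)).
      assert (0 <= aa J q0 * (1 - u n) ^ 2) by (apply Rmult_le_pos; [apply aa_nn|apply pow2_ge_0]). lra. }
    assert (Hmono2 : forall N k, u N <= u (N + k)%nat).
    { intros N k. induction k as [|k IH]. rewrite Nat.add_0_r. lra.
      replace (N + S k)%nat with (S (N + k)) by lia. specialize (Hmono (N + k)%nat). lra. }
    assert (Hconv : is_lim_seq (fun n => 1 - u n) 0).
    { apply is_lim_seq_Reals. intros eps Heps.
      destruct (classic (exists N, 1 - eps < u N)) as [[N HN]|HN].
      - exists N. intros n Hn. unfold Rdist.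
        replace n with (N + (n - N))%nat by lia. pose proof (Hmono2 N (n - N)%nat).
        pose proof (Hbnd (N + (n - N))%nat). rewrite Rabs_pos_eq; lra.
      - exfalso.
        assert (HN' : forall N, u N <= 1 - eps).
        { intros N. destruct (Rle_or_lt (u N) (1 - eps)); [assumption|]. exfalso. apply HN. exists N. exact H. }
        assert (Hgrow : forall n, u 0%nat + INR n * (aa J q0 * eps ^ 2) <= u n).
        { induction n as [|n IH]. simpl. lra.
          rewrite S_INR. rewrite Hu_rec.
          pose proof (HL5 (u n) ltac:(specialize (Hbnd n); lra)).
          pose proof (HN' n).
          assert (eps ^ 2 <= (1 - u n) ^ 2) by (apply pow_incr; lra).
          assert (aa J q0 * eps ^ 2 <= aa J q0 * (1 - u n) ^ 2) by (apply Rmult_le_compat_l; lra).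
          lra. }
        assert (Hp : 0 < aa J q0 * eps ^ 2) by (apply Rmult_lt_0_compat; [exact Ha| apply pow_lt; exact Heps]).
        destruct (INR_unbounded (2 / (aa J q0 * eps ^ 2))) as [n Hn].
        pose proof (Hgrow n). pose proof (Hbnd n). pose proof (Hbnd 0%nat).
        assert (INR n * (aa J q0 * eps ^ 2) > 2).
        { apply (Rmult_gt_compat_r (aa J q0 * eps ^ 2)) in Hn; [|exact Hp].
          replace (2 / (aa J q0 * eps ^ 2) * (aa J q0 * eps ^ 2)) with 2 in Hn by (field; lra).
          exact Hn. }
        lra. }
    set (s := fun n => 1 - u n).
    set (f := fun t => (1 - kappa J t - (1 * (1 - t) - c * Rpower (1 - t) rho))
                      / Rpower (1 - t) rho).
    set (e := fun n => f (u n)).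
    assert (Hel : is_lim_seq e 0).
    { apply is_lim_seq_Reals. intros eps Heps.
      destruct (at_left_eps _ _ _ Hexp eps Heps) as [d [Hd Hd2]].
      destruct (proj1 (is_lim_seq_Reals _ _) Hconv d Hd) as [N HN].
      exists N. intros n Hn. specialize (HN n Hn). unfold Rdist in *.
      rewrite Rminus_0_r in HN. pose proof (Hbnd n). rewrite Rabs_pos_eq in HN by lra.
      apply (Hd2 (u n)). lra. }
    assert (Hs : forall n, 0 < s n) by (intros n; unfold s; pose proof (Hbnd n); lra).
    assert (Hrec : forall n, s (S n) = s n - c * Rpower (s n) (1 + (rho - 1))
                                     + e n * Rpower (s n) (1 + (rho - 1))).
    { intros n. replace (1 + (rho - 1)) with rho by ring.
      assert (HP : 0 < Rpower (s n) rho) by (unfold Rpower; apply exp_pos).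
      unfold e, f, s. rewrite Hu_rec. unfold s in HP. field. lra. }
    assert (H := asym s e c (rho - 1) ltac:(lra) Hc' Hs Hconv Hel Hrec).
    apply is_lim_seq_incr_1. exact H.
Qed.
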